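(* Let $\mathcal{H}$ be a finite-dimensional Hilbert space and $\tau$ an ergodic quantum channel on $\mathcal{H}$. Then every eigenvector $\Theta$ of (the linear extension of) $\tau$ to the space of linear operators on $\mathcal{H}$ whose eigenvalue has modulus one is a normal operator, i.e. $\Theta\Theta^{\dagger}=\Theta^{\dagger}\Theta$.
   Context: A quantum channel is a linear, completely positive, trace-preserving map on the space of linear operators on $\mathcal{H}$. It is ergodic if it has exactly one fixed point in the set of density matrices on $\mathcal{H}$. *)

(* Defs.v *)
From HB Require Import structures.
From mathcomp Require Import all_boot all_order all_algebra.
Set Implicit Arguments. Unset Strict Implicit. Unset Printing Implicit Defensive.
Import Order.TTheory GRing.Theory Num.Theory.
Local Open Scope ring_scope.

(* The Hilbert space H is C^n, with C a numeric closed field (e.g. the complex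
   numbers); linear operators on H are the matrices 'M[C]_n. *)

Definition adjmx (C : numClosedFieldType) (m p : nat) (A : 'M[C]_(m, p)) : 'M[C]_(p, m) :=
  (map_mx Num.conj A)^T.

Definition psdF (C : numClosedFieldType) (T : finType) (M : T -> T -> C) : Prop :=
  forall v : T -> C, 0 <= \sum_(i : T) \sum_(j : T) Num.conj (v i) * M i j * v j.

Definition psd (C : numClosedFieldType) (n : nat) (A : 'M[C]_n) : Prop :=
  psdF (fun i j : 'I_n => A i j).

Definition density (C : numClosedFieldType) (n : nat) (rho : 'M[C]_n) : Prop :=
  psd rho /\ \tr rho = 1.

(* complete positivity: id_k (x) f is positive for every k.  An operator on
   C^k (x) C^n is given by its blocks B i j : 'M_n (i j : 'I_k), its entries
   being indexed by 'I_k * 'I_n. *)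
Definition completely_positive (C : numClosedFieldType) (n : nat)
    (f : 'M[C]_n -> 'M[C]_n) : Prop :=
  forall (k : nat) (B : 'I_k -> 'I_k -> 'M[C]_n),
    psdF (fun p q : 'I_k * 'I_n => B p.1 q.1 p.2 q.2) ->
    psdF (fun p q : 'I_k * 'I_n => f (B p.1 q.1) p.2 q.2).

Definition trace_preserving (C : numClosedFieldType) (n : nat)
    (f : 'M[C]_n -> 'M[C]_n) : Prop :=
  forall X : 'M[C]_n, \tr (f X) = \tr X.

Definition quantum_channel (C : numClosedFieldType) (n : nat)
    (f : {linear 'M[C]_n -> 'M[C]_n}) : Prop :=
  completely_positive f /\ trace_preserving f.

Definition ergodic (C : numClosedFieldType) (n : nat)
    (f : {linear 'M[C]_n -> 'M[C]_n}) : Prop :=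
  exists rho : 'M[C]_n, (density rho /\ f rho = rho) /\
    forall sigma : 'M[C]_n, density sigma -> f sigma = sigma -> sigma = rho.

(* Main.v *)
Require Import Defs.
From mathcomp Require Import all_boot all_order all_algebra.
From mathcomp Require Import ring.
Import Order.TTheory GRing.Theory Num.Theory.
Set Implicit Arguments. Unset Strict Implicit.
Local Open Scope ring_scope.

Section Gen.
Variable C : numClosedFieldType.
Variable T : finType.
Implicit Types (M : T -> T -> C) (u w z : T -> C).

Definition bil M u w := \sum_k \sum_l (u k)^* * M k l * w l.
Definition delta (i : T) : T -> C := fun k => (k == i)%:R.

Lemma psdF_bil M : psdF M -> forall v, 0 <= bil M v v.
Proof. by move=> H v; exact: H. Qed.
Arguments psdF_bil {M}.

Lemma bilDl M u z w : bil M (fun k => u k + z k) w = bil M u w + bil M z w.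
Proof.
rewrite /bil -big_split; apply: eq_bigr => k _; rewrite -big_split.
by apply: eq_bigr => l _; rewrite rmorphD /= !mulrDl.
Qed.

Lemma bilDr M u z w : bil M w (fun k => u k + z k) = bil M w u + bil M w z.
Proof.
rewrite /bil -big_split; apply: eq_bigr => k _; rewrite -big_split.
by apply: eq_bigr => l _; rewrite mulrDr.
Qed.

Lemma bilZl M a u w : bil M (fun k => a * u k) w = a^* * bil M u w.
Proof.
rewrite /bil mulr_sumr; apply: eq_bigr => k _; rewrite mulr_sumr.
by apply: eq_bigr => l _; rewrite rmorphM /= -!mulrA.
Qed.

Lemma bilZr M a u w : bil M w (fun k => a * u k) = a * bil M w u.
Proof.
rewrite /bil mulr_sumr; apply: eq_bigr => k _; rewrite mulr_sumr.
by apply: eq_bigr => l _; rewrite mulrCA.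
Qed.

Lemma bil2 M a b u z :
  bil M (fun k => a * u k + b * z k) (fun k => a * u k + b * z k) =
  a^* * a * bil M u u + a^* * b * bil M u z + b^* * a * bil M z u
  + b^* * b * bil M z z.
Proof.
rewrite bilDl !bilDr !bilZl !bilZr.
by rewrite !mulrA addrA.
Qed.

Lemma sum_deltar (F : T -> C) j : \sum_l F l * (l == j)%:R = F j.
Proof.
rewrite (bigD1 j) //= eqxx mulr1 big1 ?addr0 // => l /negbTE ->.
by rewrite mulr0.
Qed.

Lemma sum_deltal (F : T -> C) j : \sum_l (l == j)%:R * F l = F j.
Proof.
by under eq_bigr do rewrite mulrC; rewrite sum_deltar.
Qed.

Lemma bil_deltal M i w : bil M (delta i) w = \sum_l M i l * w l.
Proof.
rewrite /bil /delta.
under eq_bigr do (under eq_bigr do rewrite rmorph_nat -mulrA; rewrite -mulr_sumr).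
by rewrite sum_deltal.
Qed.

Lemma bil_deltar M u j : bil M u (delta j) = \sum_k (u k)^* * M k j.
Proof.
by rewrite /bil /delta; apply: eq_bigr => k _; rewrite sum_deltar.
Qed.

Lemma bil_delta M i j : bil M (delta i) (delta j) = M i j.
Proof.
by rewrite bil_deltal /delta sum_deltar.
Qed.

Lemma herm_aux (a b : C) : (a + b)^* = a + b ->
  ('i * a - 'i * b)^* = 'i * a - 'i * b -> b = a^*.
Proof.
move=> e1 e2.
rewrite rmorphD /= in e1.
rewrite rmorphB /= rmorphM /= in e2.
rewrite rmorphM /= in e2.
rewrite conjCi in e2.
have e3 : b^* - a^* = a - b.
  apply: (mulfI (neq0Ci C)).
  rewrite [RHS]mulrBr -e2 mulrBr; ring.
have : (b^* - a^*) + (a^* + b^*) = (a - b) + (a + b) by rewrite e1 e3.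
have -> : (b^* - a^*) + (a^* + b^*) = b^* *+ 2 by rewrite mulr2n; ring.
have -> : (a - b) + (a + b) = a *+ 2 by rewrite mulr2n; ring.
rewrite -(mulr_natr (b^*)) -(mulr_natr a) => /mulIf; rewrite pnatr_eq0 => /(_ isT) <-.
by rewrite conjCK.
Qed.

Lemma conj_ge0 (x : C) : 0 <= x -> x^* = x.
Proof. by move=> /ger0_real /conj_Creal. Qed.
Arguments conj_ge0 {x}.

Lemma psdF_ext M M' : (forall i j, M i j = M' i j) -> psdF M -> psdF M'.
Proof.
move=> e H v; have := H v; congr (_ <= _); apply: eq_bigr => i _.
by apply: eq_bigr => j _; rewrite e.
Qed.

Lemma psd_diag M i : psdF M -> 0 <= M i i.
Proof. by move=> H; have := psdF_bil H (delta i); rewrite bil_delta. Qed.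
Arguments psd_diag {M}.

Lemma psd_herm M : psdF M -> forall i j, M j i = (M i j)^*.
Proof.
move=> H i j.
have hi := psd_diag i H; have hj := psd_diag j H.
have h1 := psdF_bil H (fun k => 1 * delta i k + 1 * delta j k).
have h2 := psdF_bil H (fun k => 1 * delta i k + 'i * delta j k).
rewrite bil2 !bil_delta in h1; rewrite bil2 !bil_delta in h2.
move: h1 h2 => /conj_ge0 h1 /conj_ge0 h2.
rewrite rmorph1 conjCi in h1 h2.
have ii : - 'i * 'i = 1 :> C by rewrite mulNr -expr2 sqrCi opprK.
rewrite ii in h2.
apply: herm_aux.
  have -> : M i j + M j i = (1 * 1 * M i i + 1 * 1 * M i j + 1 * 1 * M j i + 1 * 1 * M j j) - M i i - M j j by ring.
  by rewrite rmorphB rmorphB /= h1 (conj_ge0 hi) (conj_ge0 hj).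
have -> : 'i * M i j - 'i * M j i = (1 * 1 * M i i + 1 * 'i * M i j + - 'i * 1 * M j i + 1 * M j j) - M i i - M j j by ring.
by rewrite rmorphB rmorphB /= h2 (conj_ge0 hi) (conj_ge0 hj).
Qed.
Arguments psd_herm {M}.

Lemma psd_kernel M w : psdF M -> bil M w w = 0 ->
  forall i, \sum_l M i l * w l = 0.
Proof.
move=> H w0 i.
set c := \sum_l M i l * w l.
have hi := psd_diag i H.
have cw : bil M w (delta i) = c^*.
  rewrite bil_deltar /c rmorph_sum /=; apply: eq_bigr => k _.
  by rewrite rmorphM /= (psd_herm H i k) mulrC.
have wc : bil M (delta i) w = c by rewrite bil_deltal.
set s := M i i + 1.
have sr : s^* = s by rewrite conj_ge0 // addr_ge0.
have := psdF_bil H (fun k => s * w k + (- c) * delta i k).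
rewrite bil2 w0 cw wc bil_delta sr rmorphN /=.
have -> : s * s * 0 + s * - c * c^* + - c^* * s * c + - c^* * - c * M i i
   = - ((c * c^*) * (M i i + 2%:R)) by rewrite /s; ring.
rewrite oppr_ge0 => h.
have h0 : 0 <= (c * c^*) * (M i i + 2%:R) by apply: mulr_ge0; [exact: mul_conjC_ge0| apply: addr_ge0].
have : (c * c^*) * (M i i + 2%:R) = 0 by apply/eqP; rewrite eq_le h h0.
move/eqP; rewrite mulf_eq0 mul_conjC_eq0 => /orP [/eqP //|].
have : 0 < M i i + 2%:R by apply: ltr_wpDl.
by move=> /lt0r_neq0 /negbTE ->.
Qed.

End Gen.

Section Cong.
Variable C : numClosedFieldType.

Lemma psd_cong (S T : finType) (M : S -> S -> C) (K : T -> S -> C) :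
  psdF M -> psdF (fun p q => \sum_b (\sum_a K p a * M a b) * (K q b)^*).
Proof.
move=> HM v.
set w := fun a => \sum_q (K q a)^* * v q.
suff -> : \sum_p \sum_q (v p)^* * (\sum_b (\sum_a K p a * M a b) * (K q b)^*) * v q
   = bil M w w by exact: HM.
rewrite /bil.
transitivity (\sum_p \sum_q \sum_b \sum_a
   ((v p)^* * K p a * M a b * (K q b)^* * v q)).
  apply: eq_bigr => p _; apply: eq_bigr => q _.
  rewrite mulr_sumr mulr_suml; apply: eq_bigr => b _.
  rewrite mulr_suml mulr_sumr mulr_suml; apply: eq_bigr => a _; ring.
transitivity (\sum_a \sum_b \sum_p \sum_q
   ((v p)^* * K p a * M a b * (K q b)^* * v q)); last first.
  apply: eq_bigr => a _; apply: eq_bigr => b _.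
  rewrite /w rmorph_sum /=.
  set Y := \sum_q (K q b)^* * v q.
  rewrite mulr_suml mulr_suml; apply: eq_bigr => p _.
  rewrite /Y mulr_sumr; apply: eq_bigr => q _.
  rewrite rmorphM /= conjCK; ring.
rewrite [RHS](eq_bigr (fun a => \sum_p \sum_b \sum_q
   ((v p)^* * K p a * M a b * (K q b)^* * v q))); last first.
  by move=> a _; rewrite exchange_big.
rewrite [RHS]exchange_big /=.
apply: eq_bigr => p _.
rewrite [RHS](eq_bigr (fun a => \sum_q \sum_b
   ((v p)^* * K p a * M a b * (K q b)^* * v q))); last first.
  by move=> a _; rewrite exchange_big.
rewrite [RHS]exchange_big /=.
apply: eq_bigr => q _.
by rewrite exchange_big.
Qed.

Lemma psd_diagmx (T : finType) (d : T -> C) : (forall i, 0 <= d i) ->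
  psdF (fun i j : T => d i * (i == j)%:R).
Proof.
move=> hd v; apply: sumr_ge0 => i _.
rewrite (eq_bigr (fun j => (v i)^* * d i * v j * (j == i)%:R)); last first.
  by move=> j _; rewrite eq_sym; ring.
rewrite sum_deltar mulrAC; apply: mulr_ge0 => //.
by rewrite mulrC mul_conjC_ge0.
Qed.

End Cong.

Section Mat.
Variable C : numClosedFieldType.
Variable n : nat.
Implicit Types A B X Z : 'M[C]_n.

Lemma adjmxE m p (A : 'M[C]_(m,p)) i j : adjmx A i j = (A j i)^*.
Proof. by rewrite !mxE. Qed.

Lemma adjmxM m p q (A : 'M[C]_(m,p)) (B : 'M[C]_(p,q)) :
  adjmx (A *m B) = adjmx B *m adjmx A.
Proof. by rewrite /adjmx map_mxM trmx_mul. Qed.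

Lemma adjmxK m p (A : 'M[C]_(m,p)) : adjmx (adjmx A) = A.
Proof. by apply/matrixP => i j; rewrite !adjmxE conjCK. Qed.

Lemma adjmx1 : adjmx (1%:M : 'M[C]_n) = 1%:M.
Proof. by rewrite /adjmx map_mx1 trmx1. Qed.

Lemma adjmxT m p (A : 'M[C]_(m,p)) : (A ^t* )%sesqui = adjmx A.
Proof. by rewrite /adjmx map_trmx. Qed.

Lemma adjmx_diag (d : 'rV[C]_n) : (forall j, (d 0 j)^* = d 0 j) ->
  adjmx (diag_mx d) = diag_mx d.
Proof.
move=> hd; apply/matrixP => i j; rewrite adjmxE !mxE.
case: (eqVneq i j) => [->|ne]; first by rewrite !mulr1n hd.
by rewrite !mulr0n rmorph0.
Qed.

Lemma spectral_herm (H : 'M[C]_n) : adjmx H = H ->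
  exists U : 'M[C]_n, exists d : 'rV[C]_n,
    U *m adjmx U = 1%:M /\ adjmx U *m U = 1%:M /\ H = adjmx U *m diag_mx d *m U.
Proof.
move=> hH.
have nH : H \is normalmx by apply/normalmxP; rewrite adjmxT hH.
have hU := spectral_unitarymx H.
exists (spectralmx H), (spectral_diag H).
have u1 : spectralmx H *m adjmx (spectralmx H) = 1%:M by rewrite -adjmxT; apply/unitarymxP.
split => //; split; first exact: mulmx1C.
by rewrite -adjmxT -invmx_unitary //; apply/orthomx_spectralP.
Qed.


Definition psdm (A : 'M[C]_n) := psdF (fun i j : 'I_n => A i j).

Lemma diagM2 m (A : 'M[C]_(m,n)) d e :
  A *m diag_mx d *m diag_mx e = A *m diag_mx (\row_j (d 0 j * e 0 j)).
Proof. by rewrite -mulmxA mulmx_diag. Qed.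

Lemma polar X : exists P V : 'M[C]_n,
  [/\ psdm P, adjmx P = P, P *m P = adjmx X *m X, V *m P = X &
      (adjmx V *m X = P /\ (V *m adjmx V) *m (V *m adjmx V) = V *m adjmx V)].
Proof.
set H := adjmx X *m X.
have hH : adjmx H = H by rewrite /H adjmxM adjmxK.
have [U [d [uU [Uu eH]]]] := spectral_herm hH.
set Ua := adjmx U in uU Uu eH.
have UU (m : nat) (A : 'M[C]_(m,n)) : A *m U *m Ua = A by rewrite -mulmxA uU mulmx1.
have UaU (m : nat) (A : 'M[C]_(m,n)) : A *m Ua *m U = A by rewrite -mulmxA Uu mulmx1.
set Y := X *m Ua.
have hY : adjmx Y = U *m adjmx X by rewrite /Y adjmxM /Ua adjmxK.
have hD : adjmx Y *m Y = diag_mx d.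
  by rewrite hY /Y mulmxA -[U *m _ *m X]mulmxA -/H eH !mulmxA UU uU mul1mx.
have dj j : d 0 j = \sum_k (Y k j)^* * Y k j.
  have := congr1 (fun M : 'M[C]_n => M j j) hD; rewrite /= !mxE eqxx mulr1n => <-.
  by apply: eq_bigr => k _; rewrite adjmxE.
have d_ge0 j : 0 <= d 0 j.
  by rewrite dj; apply: sumr_ge0 => k _; rewrite mulrC mul_conjC_ge0.
have dz j : d 0 j = 0 -> forall k, Y k j = 0.
  move=> h k; move: h; rewrite dj => /eqP; rewrite psumr_eq0; last first.
    by move=> i _; rewrite mulrC mul_conjC_ge0.
  by move=> /allP /(_ k (mem_index_enum k)); rewrite mulrC mul_conjC_eq0 => /eqP.
set s : 'rV[C]_n := \row_j sqrtC (d 0 j).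
set t : 'rV[C]_n := \row_j (sqrtC (d 0 j))^-1.
have s_ge0 j : 0 <= s 0 j by rewrite mxE sqrtC_ge0.
have sc j : (s 0 j)^* = s 0 j by rewrite conj_ge0.
have sc' j : (sqrtC (d 0 j))^* = sqrtC (d 0 j) by rewrite conj_ge0 // sqrtC_ge0.
have tc j : (t 0 j)^* = t 0 j by rewrite !mxE fmorphV /= sc'.
have ss j : s 0 j * s 0 j = d 0 j by rewrite mxE -expr2 sqrtCK.
have sz j : s 0 j = 0 -> d 0 j = 0 by move=> h; rewrite -ss h mulr0.
have ts j : t 0 j = (s 0 j)^-1 by rewrite !mxE.
have tsd j : t 0 j * d 0 j = s 0 j.
  rewrite ts; case: (eqVneq (s 0 j) 0) => [h|h]; first by rewrite h (sz _ h) mulr0.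
  by rewrite -ss mulKf.
have ttdtt j : t 0 j * t 0 j * d 0 j * t 0 j * t 0 j = t 0 j * t 0 j.
  rewrite ts; case: (eqVneq (s 0 j) 0) => [h|h]; first by rewrite h invr0 !mul0r.
  by rewrite -ss; field.
have Yts k j : Y k j * (t 0 j * s 0 j) = Y k j.
  rewrite ts; case: (eqVneq (s 0 j) 0) => [h|h]; first by rewrite (dz _ (sz _ h)) mul0r.
  by rewrite mulVf // mulr1.
set P := Ua *m diag_mx s *m U.
set V := Y *m diag_mx t *m U.
have adjDs : adjmx (diag_mx s) = diag_mx s by apply: adjmx_diag.
have adjDt : adjmx (diag_mx t) = diag_mx t by apply: adjmx_diag.
exists P, V; split; last split.
- apply: (psdF_ext _ (psd_cong (fun p a => Ua p a) (psd_diagmx s_ge0))) => i j.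
  rewrite /P !mxE; apply: eq_bigr => b _; rewrite !mxE conjCK; congr (_ * _).
  by apply: eq_bigr => a _; rewrite !mxE mulr_natr.
- by rewrite /P !adjmxM adjmxK adjDs mulmxA.
- rewrite /P !mulmxA UU diagM2 -/H eH; congr (_ *m _ *m _).
  by congr diag_mx; apply/rowP => j; have := ss j; rewrite !mxE.
- rewrite /V /P !mulmxA UU diagM2.
  have -> : Y *m diag_mx (\row_j (t 0 j * s 0 j)) = Y.
    by apply/matrixP => k j; have := Yts k j; rewrite mul_mx_diag !mxE.
  by rewrite /Y UaU.
- rewrite /V adjmxM adjmxM adjDt hY -/Ua !mulmxA -[_ *m adjmx X *m X]mulmxA -/H eH.
  rewrite !mulmxA UU diagM2 /P; congr (_ *m _ *m _).
  by congr diag_mx; apply/rowP => j; have := tsd j; rewrite !mxE.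
- have hQ : V *m adjmx V = Y *m diag_mx (\row_j (t 0 j * t 0 j)) *m adjmx Y.
    by rewrite /V adjmxM adjmxM adjDt -/Ua !mulmxA UU diagM2.
  rewrite hQ !mulmxA -[_ *m X *m Ua]mulmxA -/Y -[_ *m adjmx Y *m Y]mulmxA hD !diagM2.
  congr (_ *m _ *m _); congr diag_mx; apply/rowP => j.
  clearbody t; rewrite !mxE.
  by transitivity (t 0 j * t 0 j * d 0 j * t 0 j * t 0 j); [ring | exact: ttdtt].
Qed.


Lemma tr_cong_ge0 (W Z : 'M[C]_n) : psdm Z -> 0 <= \tr (adjmx W *m Z *m W).
Proof.
move=> HZ; apply: sumr_ge0 => j _.
have := HZ (fun k => W k j); congr (_ <= _).
rewrite /bil mxE exchange_big /=; apply: eq_bigr => k _.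
rewrite mxE mulr_suml; apply: eq_bigr => l _; rewrite !mxE; ring.
Qed.

Lemma adjmxB (A B : 'M[C]_n) : adjmx (A - B) = adjmx A - adjmx B.
Proof. by apply/matrixP => i j; rewrite !mxE rmorphB. Qed.

Lemma tr_contract (V Z : 'M[C]_n) : psdm Z ->
  (V *m adjmx V) *m (V *m adjmx V) = V *m adjmx V ->
  \tr (adjmx V *m Z *m V) <= \tr Z.
Proof.
move=> HZ hQ; set Q := V *m adjmx V in hQ.
set W := 1%:M - Q.
have aQ : adjmx Q = Q by rewrite /Q adjmxM adjmxK.
have aW : adjmx W = W by rewrite /W adjmxB adjmx1 aQ.
have WW : W *m W = W.
  by rewrite /W mulmxBl mul1mx mulmxBr mulmx1 hQ subrr subr0.
have e1 : \tr (adjmx V *m Z *m V) = \tr (Q *m Z).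
  by rewrite mxtrace_mulC mulmxA.
have e2 : \tr (adjmx W *m Z *m W) = \tr Z - \tr (Q *m Z).
  rewrite aW mxtrace_mulC mulmxA WW /W mulmxBl mul1mx.
  by rewrite linearB.
rewrite e1 -subr_ge0 -e2; exact: tr_cong_ge0.
Qed.

End Mat.

Lemma psd_comp (C : numClosedFieldType) (S T : finType) (M : T -> T -> C) (f : S -> T) :
  psdF M -> psdF (fun a b => M (f a) (f b)).
Proof.
move=> HM; apply: (psdF_ext _ (psd_cong (fun a p => ((f a == p)%:R : C)) HM)) => a b.
rewrite (eq_bigr (fun q => M (f a) q * (q == f b)%:R)) ?sum_deltar //.
move=> q _; rewrite rmorph_nat eq_sym; congr (_ * _).
by under eq_bigr do rewrite eq_sym; rewrite sum_deltal.
Qed.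

Lemma bil_row (C : numClosedFieldType) (T : finType) (M : T -> T -> C) u w :
  bil M u w = \sum_k (u k)^* * \sum_l M k l * w l.
Proof. by apply: eq_bigr => k _; rewrite mulr_sumr; apply: eq_bigr => l _; rewrite mulrA. Qed.

Lemma sum_I2 (C : numClosedFieldType) (T : finType) (F : 'I_2 * T -> C) :
  \sum_p F p = \sum_k F (ord0, k) + \sum_k F (lift ord0 ord0, k).
Proof.
rewrite (eq_bigr (fun p => F (p.1, p.2))); last by case.
by rewrite -(pair_bigA _ (fun i k => F (i, k))) big_ord_recl big_ord1.
Qed.

Section Key.
Variable C : numClosedFieldType.
Variable n : nat.

Lemma key (tau : {linear 'M[C]_n -> 'M[C]_n}) (lambda : C) (X : 'M[C]_n) :
  completely_positive tau -> trace_preserving tau -> `|lambda| = 1 ->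
  tau X = lambda *: X ->
  tau (adjmx X) = lambda^* *: adjmx X /\
  exists P, [/\ psdm P, P *m P = adjmx X *m X & tau P = P].
Proof.
move=> hcp htp hl hX.
have [P [V [hP hPa hPP hVP [hVX hQ]]]] := polar X.
have ll : lambda * lambda^* = 1 by rewrite -normCK hl expr1n.
have l0 : lambda^* != 0.
  by apply/eqP => h; move: ll; rewrite h mulr0 => /eqP; rewrite eq_sym oner_eq0.
pose i1 : 'I_2 := lift ord0 ord0.
pose Km (i : 'I_2) : 'M[C]_n := if i == ord0 then V else 1%:M.
pose B (i j : 'I_2) := Km i *m P *m adjmx (Km j).
have hB : psdF (fun p q : 'I_2 * 'I_n => B p.1 q.1 p.2 q.2).
  apply: (psdF_ext _ (psd_cong (fun p a => Km p.1 p.2 a) hP)) => p q.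
  rewrite /B mxE; apply: eq_bigr => b _; rewrite mxE adjmxE.
  by congr (_ * _); apply: eq_bigr => a _; rewrite mxE.
have hN := hcp 2 B hB.
set N := (fun p q : 'I_2 * 'I_n => tau (B p.1 q.1) p.2 q.2) in hN.
have B01 : B ord0 i1 = X by rewrite /B /Km /= adjmx1 mulmx1.
have B10 : B i1 ord0 = adjmx X by rewrite /B /Km /= mul1mx -hVP adjmxM hPa.
have B11 : B i1 i1 = P by rewrite /B /Km /= mul1mx adjmx1 mulmx1.
set A := V *m P *m adjmx V.
have B00 : B ord0 ord0 = A by [].
have hXa : tau (adjmx X) = lambda^* *: adjmx X.
  apply/matrixP => k l.
  have := psd_herm hN (ord0, l) (i1, k); rewrite /N /= B10 B01 hX => ->.
  by rewrite !mxE rmorphM.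
split => //.
exists P; split => //.
pose w (j : 'I_n) (p : 'I_2 * 'I_n) : C :=
  if p.1 == ord0 then V p.2 j else - lambda^* * (p.2 == j)%:R.
have nw1 j k : \sum_q N (i1, k) q * w j q = lambda^* * (P k j - tau P k j).
  rewrite sum_I2 /N /w /= B10 B11 hXa.
  have XV : adjmx X *m V = P by rewrite -(adjmxK V) -adjmxM hVX hPa.
  transitivity (lambda^* * (adjmx X *m V) k j + - lambda^* * tau P k j); last by rewrite XV; ring.
  congr (_ + _).
    by rewrite mxE mulr_sumr; apply: eq_bigr => l _; rewrite !mxE mulrA.
  rewrite (eq_bigr (fun l => (- lambda^* * tau P k l) * (l == j)%:R)) ?sum_deltar //.
  by move=> l _; ring.
have nw0 j k : \sum_q N (ord0, k) q * w j q = (tau A *m V) k j - X k j.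
  rewrite sum_I2 /N /w /= B01 hX.
  rewrite [X in _ + X = _](eq_bigr (fun l => ((lambda *: X) k l * - lambda^*) * (l == j)%:R)); last by move=> l _; ring.
  rewrite sum_deltar mxE; congr (_ + _).
    by rewrite mxE.
  by rewrite mulrN mulrAC ll mul1r.
have tA : psdm (tau A) by exact: (psd_comp (fun k => (ord0, k)) hN).
have bilw j : bil N (w j) (w j) = (adjmx V *m tau A *m V) j j - P j j - (P j j - tau P j j).
  rewrite bil_row sum_I2.
  under eq_bigr => k _ do rewrite nw0.
  under [X in _ + X = _]eq_bigr => k _ do rewrite nw1.
  rewrite /w /=.
  have e1 : \sum_k (V k j)^* * ((tau A *m V) k j - X k j) =
      (adjmx V *m tau A *m V) j j - P j j.
    transitivity (\sum_k (V k j)^* * (tau A *m V) k j - \sum_k (V k j)^* * X k j).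
      by rewrite -sumrB; apply: eq_bigr => k _; rewrite mulrBr.
    congr (_ - _).
      by rewrite -mulmxA mxE; apply: eq_bigr => k _; rewrite adjmxE.
    by rewrite -hVX mxE; apply: eq_bigr => k _; rewrite adjmxE.
  have e2 : \sum_k (- lambda^* * (k == j)%:R)^* * (lambda^* * (P k j - tau P k j))
      = - (P j j - tau P j j).
    rewrite (eq_bigr (fun k => (k == j)%:R * (- (P k j - tau P k j)))) ?sum_deltal //.
    move=> k _; rewrite rmorphM rmorphN /= conjCK rmorph_nat.
    transitivity ((lambda * lambda^*) * ((k == j)%:R * - (P k j - tau P k j))); first by ring.
    by rewrite ll mul1r.
  by rewrite e1 e2.
have hsum : \sum_j bil N (w j) (w j) <= 0.
  rewrite (eq_bigr _ (fun j _ => bilw j)) sumrB sumrB.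
  rewrite sumrB.
  have trA : \tr (tau A) = \tr P.
    by rewrite htp /A mxtrace_mulC hVP hVX.
  have := tr_contract tA hQ; rewrite trA.
  rewrite -/(mxtrace _) -/(mxtrace P) -/(mxtrace (tau P)) htp.
  by rewrite subrr subr0 subr_le0.
have hj j : bil N (w j) (w j) = 0.
  apply: (psumr_eq0P (P := predT) (fun j _ => psdF_bil hN (w j))) => //.
  by apply/eqP; rewrite eq_le hsum sumr_ge0 // => i _; exact: psdF_bil.
apply/matrixP => k j.
have := psd_kernel hN (hj j) (i1, k); rewrite nw1 => /eqP.
by rewrite mulf_eq0 (negbTE l0) /= subr_eq0 => /eqP ->.
Qed.

End Key.

Section Main.
Variable C : numClosedFieldType.
Variable n : nat.

Lemma psd_tr0 (P : 'M[C]_n) : psdm P -> \tr P = 0 -> P = 0.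
Proof.
move=> hP h0.
have hd i : P i i = 0.
  apply: (psumr_eq0P (P := predT) (fun i _ => psd_diag i hP)) => //.
apply/matrixP => k i; rewrite mxE.
have hb : bil (fun i j => P i j) (@delta C _ i) (@delta C _ i) = 0 by rewrite bil_delta hd.
have := psd_kernel hP hb k.
by rewrite /delta sum_deltar.
Qed.

Lemma psd_scale (P : 'M[C]_n) (a : C) : 0 <= a -> psdm P -> psdm (a *: P).
Proof.
move=> ha hP v; have := mulr_ge0 ha (hP v); congr (_ <= _).
rewrite mulr_sumr; apply: eq_bigr => i _; rewrite mulr_sumr; apply: eq_bigr => j _.
by rewrite mxE; ring.
Qed.

Lemma fixed_rho (tau : {linear 'M[C]_n -> 'M[C]_n}) (rho P : 'M[C]_n) :
  trace_preserving tau ->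
  (forall sigma : 'M[C]_n, density sigma -> tau sigma = sigma -> sigma = rho) ->
  psdm P -> tau P = P -> P = \tr P *: rho.
Proof.
move=> htp huniq hP hf.
have c0 : 0 <= \tr P by apply: sumr_ge0 => i _; exact: psd_diag.
case: (eqVneq (\tr P) 0) => [h|h].
  by rewrite h scale0r; apply: psd_tr0.
have e := huniq ((\tr P)^-1 *: P).
rewrite -e ?scalerA ?divff ?scale1r //.
- split; first by apply: psd_scale => //; rewrite invr_ge0.
  by rewrite linearZ /= mulVf.
- by rewrite linearZ /= hf.
Qed.

End Main.

Unset Implicit Arguments.
Set Strict Implicit.

Theorem mainTheorem14 (C : numClosedFieldType) (n : nat)
    (tau : {linear 'M[C]_n -> 'M[C]_n}) :
  quantum_channel tau -> ergodic tau ->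
  forall (lambda : C) (Theta : 'M[C]_n),
    Theta != 0 -> `|lambda| = 1 -> tau Theta = lambda *: Theta ->
    Theta *m adjmx Theta = adjmx Theta *m Theta.
Proof.
move=> [hcp htp] [rho [[[hrho trrho] frho] huniq]] lambda Theta _ hl hT.
have [hTa [P [hP hPP hPf]]] := key hcp htp hl hT.
have hl' : `|lambda^*| = 1 by rewrite norm_conjC.
have [_ [P' [hP' hPP' hPf']]] := key hcp htp hl' hTa.
rewrite adjmxK in hPP'.
have eP := fixed_rho htp huniq hP hPf.
have eP' := fixed_rho htp huniq hP' hPf'.
set c := \tr P in eP; set c' := \tr P' in eP'.
have e1 : adjmx Theta *m Theta = (c * c) *: (rho *m rho).
  by rewrite -hPP eP -scalemxAl -scalemxAr scalerA.
have e2 : Theta *m adjmx Theta = (c' * c') *: (rho *m rho).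
  by rewrite -hPP' eP' -scalemxAl -scalemxAr scalerA.
have rr : \tr (rho *m rho) = \sum_i \sum_j rho i j * (rho i j)^*.
  apply: eq_bigr => i _; rewrite mxE; apply: eq_bigr => j _.
  by rewrite (psd_herm hrho i j).
have rr0 : \tr (rho *m rho) != 0.
  apply/eqP => h0.
  have z i j : rho i j = 0.
    have h2 : \sum_j rho i j * (rho i j)^* = 0.
      apply: (psumr_eq0P (P := predT) (F := fun i => \sum_j rho i j * (rho i j)^*)) => //.
        by move=> i' _; apply: sumr_ge0 => j' _; exact: mul_conjC_ge0.
      by rewrite -rr.
    have := psumr_eq0P (P := predT) (F := fun j => rho i j * (rho i j)^*)
       (fun j _ => mul_conjC_ge0 (rho i j)) h2 (i := j) isT.
    by move/eqP; rewrite mul_conjC_eq0 => /eqP.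
  move: trrho; rewrite /mxtrace big1 ?z // => /eqP; by rewrite eq_sym oner_eq0.
have : c' * c' = c * c.
  have := mxtrace_mulC Theta (adjmx Theta); rewrite e1 e2 !linearZ /=.
  by move/(mulIf rr0).
by rewrite e1 e2 => ->.
Qed.
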